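(* A $\mathsf{CK}$-frame $\mathcal{X}=(X,e,\le,R)$ validates $(\Diamond p\to\Box q)\to\Box(p\to q)$ (for distinct propositional variables $p,q$) if and only if it satisfies ($\mathsf{I}_{\Diamond\Box}$-corr): for all $x,y,z\in X$, if $xRy$, $y\le z$ and $z\neq e$, then there exist $u,w$ with $x\le u$, $uRw$, $w\le z$, such that for every $s$ with $u\le s$, either $sRe$ or there is $t$ with $sRt$ and $z\le t$.
   Context: A $\mathsf{CK}$-frame is a tuple $(X,e,\le,R)$ where $(X,\le)$ is a preorder, $e\in X$ is a maximal element of $(X,\le)$, and $R$ is a binary relation on $X$ with $eRx$ iff $x=e$. A valuation assigns to each propositional variable $p$ an upset $V(p)$ with $e\in V(p)$. Forcing: $x\Vdash p$ iff $x\in V(p)$; $x\Vdash\bot$ iff $x=e$; $\wedge,\vee$ pointwise; $x\Vdash\varphi\to\psi$ iff for all $y\ge x$, $y\Vdash\varphi$ implies $y\Vdash\psi$; $x\Vdash\Box\varphi$ iff for all $y,z$ with $x\le y$ and $yRz$, $z\Vdash\varphi$; $x\Vdash\Diamond\varphi$ iff for all $y\ge x$ there is $z$ with $yRz$ and $z\Vdash\varphi$. A frame validates a formula if it is forced at every world under every valuation. *)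

(* Defs.v *)
Record CKframe := {
  world :> Type;
  fallible : world;
  le : world -> world -> Prop;
  rel : world -> world -> Prop;
  le_refl : forall x, le x x;
  le_trans : forall x y z, le x y -> le y z -> le x z;
  fallible_max : forall x, le fallible x -> x = fallible;
  fallible_rel : forall x, rel fallible x <-> x = fallible
}.

Inductive form : Type :=
| Var : nat -> form
| Bot : form
| And : form -> form -> form
| Or : form -> form -> form
| Imp : form -> form -> form
| Box : form -> form
| Dia : form -> form.

Definition valuation (F : CKframe) (V : nat -> F -> Prop) : Prop :=
  forall p, V p (fallible F) /\ (forall x y, le F x y -> V p x -> V p y).

Fixpoint forces (F : CKframe) (V : nat -> F -> Prop) (x : F) (phi : form) : Prop :=
  match phi with
  | Var p => V p x
  | Bot => x = fallible F
  | And a b => forces F V x a /\ forces F V x b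
  | Or a b => forces F V x a \/ forces F V x b
  | Imp a b => forall y, le F x y -> forces F V y a -> forces F V y b
  | Box a => forall y z, le F x y -> rel F y z -> forces F V z a
  | Dia a => forall y, le F x y -> exists z, rel F y z /\ forces F V z a
  end.

Definition validates (F : CKframe) (phi : form) : Prop :=
  forall V, valuation F V -> forall x : F, forces F V x phi.

Definition I_DiaBox_corr (F : CKframe) : Prop :=
  forall x y z : F, rel F x y -> le F y z -> z <> fallible F ->
    exists u w : F, le F x u /\ rel F u w /\ le F w z /\
      (forall s : F, le F u s ->
         rel F s (fallible F) \/ exists t : F, rel F s t /\ le F z t).

(* Main.v *)
Require Import Defs.
From Stdlib Require Classical_Prop.

Theorem mainTheorem8 (F : CKframe) :
  validates F (Imp (Imp (Dia (Var 0)) (Box (Var 1))) (Box (Imp (Var 0) (Var 1))))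
  <-> I_DiaBox_corr F.
Proof.
split.
- intros Hv x y z Hxy Hyz Hz.
  set (V := fun (n : nat) (v : F) =>
    match n with
    | 0 => le F z v \/ v = fallible F
    | _ => v = fallible F \/ exists u w, le F x u /\ rel F u w /\ le F w v /\
             (forall s, le F u s -> exists t, rel F s t /\ (le F z t \/ t = fallible F))
    end).
  assert (HV : valuation F V).
  { intros [|n]; simpl; split.
    - right; reflexivity.
    - intros a b Hab [H|H].
      + left; eapply le_trans; eauto.
      + subst a. right. apply fallible_max; auto.
    - left; reflexivity.
    - intros a b Hab [H|H].
      + subst a. left. apply fallible_max; auto.
      + destruct H as (u & w & H1 & H2 & H3 & H4).
        right. exists u, w. repeat split; auto. eapply le_trans; eauto. }
  specialize (Hv V HV x x (le_refl F x)).
  assert (Hpre : forces F V x (Imp (Dia (Var 0)) (Box (Var 1)))).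
  { simpl. intros u Hxu Hd u' w Huu' Hw. right.
    exists u', w. repeat split; auto.
    - eapply le_trans; eauto.
    - apply le_refl.
    - intros s Hs. apply Hd. eapply le_trans; eauto. }
  specialize (Hv Hpre x y (le_refl F x) Hxy z Hyz (or_introl (le_refl F z))).
  simpl in Hv. destruct Hv as [He|(u & w & H1 & H2 & H3 & H4)].
  + contradiction.
  + exists u, w. repeat split; auto.
    intros s Hs. destruct (H4 s Hs) as (t & Ht & [Hzt|Hte]).
    * right. exists t; auto.
    * subst t. left; auto.
- intros Hc V HV x x' Hxx' Hpre y z Hx'y Hyz z' Hzz' Hp.
  simpl in *.
  destruct (Classical_Prop.classic (z' = fallible F)) as [He|Hne].
  { subst z'. apply (HV 1). }
  destruct (Hc y z z' Hyz Hzz' Hne) as (u & w & H1 & H2 & H3 & H4).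
  + apply (proj2 (HV 1) w z' H3).
    refine (Hpre u (le_trans _ _ _ _ Hx'y H1) _ u w (le_refl F u) H2).
    * intros s Hs. destruct (H4 s Hs) as [Hse|(t & Ht & Hzt)].
      -- exists (fallible F). split; auto. apply (HV 0).
      -- exists t. split; auto. apply (proj2 (HV 0) z' t Hzt Hp).
Qed.
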